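(* Let $G=(V,E)$ be an $n$-vertex finite simple undirected graph with distinct vertex IDs, whose neighborhood independence is bounded by a constant $c$, and let $K$ be a positive integer with $\delta(G)\ge K$. Then the procedure Efficient-VM run on $G$ with parameter $K$ terminates within $O(\log^* n + K^4)$ rounds.
   Context: $\Gamma(v)$ is the neighbor set of $v$, $\deg(v)=|\Gamma(v)|$, $\delta(G)=\min_v\deg(v)$. The neighborhood independence of $G$ is the maximum over $v$ of the size of an independent set contained in $\Gamma(v)$. Model: synchronous CONGEST model (in each round every vertex sends an $O(\log n)$-bit message to each neighbor and computes locally). Operation $K$-Next-Modulo$(v,\Gamma(v),K)$: list $\Gamma(v)\cup\{v\}$ in ascending ID order as $u_1,\dots,u_d$ ($d=\deg(v)+1$) with $v=u_i$; $v$ selects $u_{i+1},\dots,u_{i+K}$, indices cyclic modulo $d$. Procedure Efficient-VM$(G,K)$: (1) every vertex selects its $K$ neighbors by $K$-Next-Modulo (one round); let $G'=(V,E')$ with $E'$ the set of edges $\{v,u\}$ such that $v$ selected $u$, and $\Delta'$ its maximum degree; (2) compute a 2-hop coloring of $G'$ (vertices at distance at most $2$ in $G'$ get distinct colors) by running Linial's algorithm on $G'^2$, which uses $O(\Delta'^4)$ colors and $\log^* n+O(1)$ rounds; (3) process the color classes one per round in round-robin order, each active vertex distributing its backup data to the $K$ vertices it selected. *)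

(* Defs.v *)
From mathcomp Require Import all_boot.
Set Implicit Arguments. Unset Strict Implicit. Unset Printing Implicit Defensive.

Section Defs.
Variables (T : finType) (e : rel T) (id : T -> nat).

Definition deg (v : T) : nat := #|[set u | e v u]|.

Definition nbr_indep_le (c : nat) : Prop :=
  forall (v : T) (S : {set T}), S \subset [set u | e v u] ->
    (forall x y, x \in S -> y \in S -> ~~ e x y) -> #|S| <= c.

Definition closed_nbhd_sorted (v : T) : seq T :=
  sort (fun x y => id x <= id y) [seq u <- enum T | (u == v) || e v u].

(* K-Next-Modulo(v, Gamma(v), K): v = u_i selects u_{i+1},...,u_{i+K} cyclically
   (0-based indices here). *)
Definition k_next_modulo (K : nat) (v : T) : seq T :=
  let s := closed_nbhd_sorted v in
  let d := size s in
  let i := index v s in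
  [seq nth v s ((i + j) %% d) | j <- iota 1 K].

Definition eG' (K : nat) : rel T :=
  fun x y => (y \in k_next_modulo K x) || (x \in k_next_modulo K y).

Definition maxdeg_G' (K : nat) : nat := \max_(v : T) #|[set u | eG' K v u]|.

Definition two_hop_coloring (K : nat) (col : T -> nat) : Prop :=
  forall x y, x != y -> (eG' K x y || [exists z, eG' K x z && eG' K z y]) ->
    col x != col y.

Definition num_colors (col : T -> nat) : nat :=
  size (undup [seq col x | x <- enum T]).

(* Rounds of Efficient-VM: 1 round for selection, [linial_rounds] rounds for the
   2-hop coloring, then one round per color class (round robin). *)
Definition efficient_vm_rounds (linial_rounds : nat) (col : T -> nat) : nat :=
  1 + linial_rounds + num_colors col.
End Defs.

Fixpoint logstar_fuel (f n : nat) : nat :=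
  if n <= 1 then 0 else
  match f with 0 => 0 | f'.+1 => (logstar_fuel f' (trunc_log 2 n)).+1 end.
Definition logstar (n : nat) : nat := logstar_fuel n n.

(* Main.v *)
Require Import Defs.
From mathcomp Require Import all_boot zify.
Set Implicit Arguments. Unset Strict Implicit. Unset Printing Implicit Defensive.

Lemma mod_wrap i j d : i < d -> j < d -> d <= i + j -> (i+j) %% d = i + j - d.
Proof.
move=> hi hj hd.
have -> : i + j = (i + j - d) + d by lia.
by rewrite modnDr modn_small; lia.
Qed.

Lemma count_idx (T : finType) (s : seq T) (Y : {set T}) a b :
  uniq s -> (forall y, y \in Y -> y \in s /\ a < index y s /\ index y s < b) ->
  #|Y| <= b - a.+1.
Proof.
move=> us hY.
rewrite cardE -(size_map (index^~ s)) -(size_iota a.+1 (b - a.+1)).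
apply: uniq_leq_size.
  rewrite map_inj_in_uniq ?enum_uniq // => x y.
  rewrite !mem_enum => /hY [xs _] /hY [ys _] h.
  by rewrite -(nth_index x xs) h nth_index.
move=> k /mapP [y]; rewrite mem_enum => /hY [_ [h1 h2]] ->.
rewrite mem_iota; lia.
Qed.

Lemma indep_cover (T : finType) (e : rel T) (id : T -> nat) K :
  symmetric e -> irreflexive e -> injective id ->
  forall n (S : {set T}), #|S| <= n ->
  (forall x, x \in S -> #|[set y in S | e x y & id x < id y]| < K) ->
  exists I : {set T}, I \subset S /\ (forall x y, x \in I -> y \in I -> ~~ e x y)
    /\ #|S| <= K * #|I|.
Proof.
move=> sym irr inj; elim=> [|n IH] S hS hF.
  exists set0; split; first exact: sub0set.
  split; first by move=> x y; rewrite in_set0.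
  by move: hS; rewrite leqn0 => /eqP ->.
have [S0|[x0 x0S]] := set_0Vmem S.
  exists set0; split; first exact: sub0set.
  split; first by move=> x y; rewrite in_set0.
  by rewrite S0 cards0.
case: (arg_minnP id x0S) => x xS xmin.
set N := [set y in S | e x y].
have hN : #|N| < K.
  apply: leq_ltn_trans (hF x xS); apply: subset_leq_card.
  apply/subsetP => y; rewrite !inE => /andP [yS exy]; rewrite yS exy /=.
  rewrite ltn_neqAle xmin // andbT; apply/negP => /eqP /inj exy'.
  by move: exy; rewrite exy' irr.
set S' := S :\: (x |: N).
have hS' : #|S'| <= n.
  have : #|S'| < #|S|.
    apply: proper_card; apply/properP; split; first exact: subsetDl.
    by exists x => //; rewrite !inE eqxx.
  lia.
have hF' : forall y, y \in S' -> #|[set z in S' | e y z & id y < id z]| < K.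
  move=> y yS'; have yS : y \in S by move: yS'; rewrite inE => /andP [].
  apply: leq_ltn_trans (hF y yS); apply: subset_leq_card.
  apply/subsetP => z; rewrite !inE => /andP [/andP [_ zS] ->]; by rewrite zS.
have [I' [I'S [I'ind I'card]]] := IH S' hS' hF'.
exists (x |: I'); split.
  rewrite subUset sub1set; apply/andP; split => //; exact: (subset_trans I'S (subsetDl _ _)).
split.
  have nxI : forall y, y \in I' -> ~~ e x y.
    move=> y /(subsetP I'S); rewrite !inE negb_or => /andP [/andP [_ h] yS].
    by move: h; rewrite yS.
  move=> a b; rewrite !inE => /orP [/eqP ->|aI] /orP [/eqP ->|bI].
  - by rewrite irr.
  - exact: nxI.
  - by rewrite sym; apply: nxI.
  - exact: I'ind.
have xI' : x \notin I'.
  by apply/negP => /(subsetP I'S); rewrite !inE eqxx.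
rewrite cardsU1 xI'.
have : #|S| <= #|S'| + #|x |: N|.
  apply: leq_trans (leq_card_setU _ _); apply: subset_leq_card.
  by apply/subsetP => y yS; rewrite !inE yS; case: (y == x); case: (e x y).
have := cardsU1 x N.
nia.
Qed.

Section Sel.
Variables (T : finType) (e : rel T) (id : T -> nat).
Hypotheses (sym : symmetric e) (irr : irreflexive e) (inj : injective id).

Lemma cns_mem x y : (y \in closed_nbhd_sorted e id x) = (y == x) || e x y.
Proof. by rewrite /closed_nbhd_sorted mem_sort mem_filter mem_enum andbT. Qed.

Lemma cns_uniq x : uniq (closed_nbhd_sorted e id x).
Proof. by rewrite /closed_nbhd_sorted sort_uniq filter_uniq // enum_uniq. Qed.

Lemma cns_size x : size (closed_nbhd_sorted e id x) = (deg e x).+1.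
Proof.
rewrite -(card_uniqP (cns_uniq x)) /deg.
have -> : #|closed_nbhd_sorted e id x| = #|x |: [set u | e x u]|.
  by apply: eq_card => y; rewrite cns_mem !inE.
by rewrite cardsU1 inE irr.
Qed.

Lemma cns_index x a b : a \in closed_nbhd_sorted e id x ->
  b \in closed_nbhd_sorted e id x -> id a < id b ->
  index a (closed_nbhd_sorted e id x) < index b (closed_nbhd_sorted e id x).
Proof.
move=> aS bS hab.
have srt : sorted (fun x y => id x <= id y) (closed_nbhd_sorted e id x).
  by apply: sort_sorted => p q; apply: leq_total.
have tr : transitive (fun x y : T => id x <= id y).
  by move=> p q r /= h1 h2; apply: leq_trans h1 h2.
case: (ltngtP (index a _) (index b _)) => // h.
  have := sorted_ltn_index tr srt b a bS aS h => /=; lia.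
have : a = b by rewrite -(nth_index a aS) h nth_index.
by move=> abe; move: hab; rewrite abe ltnn.
Qed.

Lemma select_facts K x v : K < size (closed_nbhd_sorted e id x) ->
  v \in k_next_modulo e id K x -> x != v ->
  [/\ e x v,
      (id x < id v -> #|[set y | [&& e x y, id x < id y & id y < id v]]| < K) &
      (id v < id x -> #|[set y | e x y & id x < id y]| < K)].
Proof.
move=> hK; rewrite /k_next_modulo.
set s := closed_nbhd_sorted e id x; set d := size s; set i := index x s.
move=> /mapP [j]; rewrite mem_iota => /andP [j1 j2] ->.
have hKd : K < d := hK.
have xs : x \in s by rewrite cns_mem eqxx.
have id_ : i < d by rewrite /i /d index_mem.
have d0 : 0 < d by lia.
set p := (i + j) %% d.
have pd : p < d by apply: ltn_pmod.
have us : uniq s := cns_uniq x.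
have vs : nth x s p \in s by apply: mem_nth.
have ip : index (nth x s p) s = p by apply: index_uniq.
move=> xv.
have exv : e x (nth x s p) by move: vs; rewrite cns_mem eq_sym (negbTE xv).
split => // hid.
- have hip : i < p by rewrite -ip; apply: cns_index.
  have hij : i + j < d.
    case: (ltnP (i + j) d) => // h; move: hip; rewrite /p mod_wrap //; lia.
  have pe : p = i + j by rewrite /p modn_small.
  have := count_idx (b := i + j) (a := i) us (Y := [set y | [&& e x y, id x < id y & id y < id (nth x s p)]]).
  move=> H; apply: leq_ltn_trans (H _) _; last lia.
  move=> y; rewrite inE => /and3P [exy h1 h2].
  have ys : y \in s by rewrite cns_mem exy orbT.
  split => //; split; first by apply: cns_index.
  by rewrite -pe -ip; apply: cns_index.
- have hip : p < i by rewrite -ip; apply: cns_index.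
  have hij : d <= i + j.
    case: (ltnP (i + j) d) => // h; move: hip; rewrite /p modn_small //; lia.
  have := count_idx (b := d) (a := i) us (Y := [set y | e x y & id x < id y]).
  move=> H; apply: leq_ltn_trans (H _) _; last lia.
  move=> y; rewrite inE => /andP [exy h1].
  have ys : y \in s by rewrite cns_mem exy orbT.
  split => //; split; first by apply: cns_index.
  by rewrite index_mem.
Qed.
End Sel.

Lemma degG'_bound (T : finType) (e : rel T) (id : T -> nat) c K :
  symmetric e -> irreflexive e -> injective id -> nbr_indep_le e c -> 0 < K ->
  (forall v, K <= deg e v) ->
  forall v, #|[set u | eG' e id K v u]| <= K * (2 + 2 * c).
Proof.
move=> sym irr inj hc K0 hdeg v.
have hsz : forall x, K < size (closed_nbhd_sorted e id x).
  by move=> x; rewrite cns_size //; apply: hdeg.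
set U1 := [set u | [&& v \in k_next_modulo e id K u, u != v & id u < id v]].
set U2 := [set u | [&& v \in k_next_modulo e id K u, u != v & id v < id u]].
have inN : forall u, v \in k_next_modulo e id K u -> u != v -> e v u.
  by move=> u hu uv; have [h _ _] := select_facts (hsz u) hu uv; rewrite sym.
have bnd : forall U : {set T}, U \subset [set u | (v \in k_next_modulo e id K u) && (u != v)] ->
  (forall x, x \in U -> #|[set y in U | e x y & id x < id y]| < K) -> #|U| <= K * c.
  move=> U hU hF.
  have [I [IU [Iind IC]]] := indep_cover sym irr inj (leqnn #|U|) hF.
  apply: (leq_trans IC); rewrite leq_mul2l; apply/orP; right.
  apply: (hc v) => //; apply/subsetP => y /(subsetP IU) /(subsetP hU).
  by rewrite !inE => /andP [h1 h2]; apply: inN.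
have b1 : #|U1| <= K * c.
  apply: bnd.
    by apply/subsetP => u; rewrite !inE => /and3P [-> -> _].
  move=> x; rewrite inE => /and3P [hx xv hid].
  have [_ h _] := select_facts (hsz x) hx xv.
  apply: leq_ltn_trans (h hid); apply: subset_leq_card; apply/subsetP => y.
  by rewrite !inE => /andP [/and3P [_ _ ->] /andP [-> ->]].
have b2 : #|U2| <= K * c.
  apply: bnd.
    by apply/subsetP => u; rewrite !inE => /and3P [-> -> _].
  move=> x; rewrite inE => /and3P [hx xv hid].
  have [_ _ h] := select_facts (hsz x) hx xv.
  apply: leq_ltn_trans (h hid); apply: subset_leq_card; apply/subsetP => y.
  by rewrite !inE => /andP [_ /andP [-> ->]].
have b0 : #|[set u | u \in k_next_modulo e id K v]| <= K.
  rewrite cardsE; apply: leq_trans (card_size _) _.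
  by rewrite /k_next_modulo size_map size_iota.
have sub : [set u | eG' e id K v u] \subset
   [set u | u \in k_next_modulo e id K v] :|: ([set v] :|: U1 :|: U2).
  apply/subsetP => u; rewrite !inE /eG' => /orP [->//|hu].
  case: (eqVneq u v) => [->|uv]; first by rewrite /= !orbT.
  case: (ltngtP (id u) (id v)) => h.
  - by rewrite hu /= ?orbT.
  - by rewrite hu /= ?orbT.
  - by move: uv; rewrite (inj _ _ h) eqxx.
apply: leq_trans (subset_leq_card sub) _.
apply: leq_trans (leq_card_setU _ _) _.
have h1 := (leq_card_setU ([set v] :|: U1) U2).1.
have h2 := (leq_card_setU [set v] U1).1.
move: h1 h2; rewrite cards1.
nia.
Qed.

Theorem lemma2 :
  forall c A B : nat, exists C : nat,
  forall (T : finType) (e : rel T) (id : T -> nat),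
    symmetric e -> irreflexive e -> injective id ->
    nbr_indep_le e c ->
  forall K : nat, 0 < K -> (forall v : T, K <= deg e v) ->
  forall (col : T -> nat) (linial_rounds : nat),
    two_hop_coloring e id K col ->
    num_colors col <= A * (maxdeg_G' e id K) ^ 4 ->
    linial_rounds <= logstar #|T| + B ->
    efficient_vm_rounds linial_rounds col <= C * (logstar #|T| + K ^ 4).
Proof.
move=> c A B; exists (2 + B + A * (2 + 2 * c) ^ 4).
move=> T e id sym irr inj hc K K0 hdeg col L _ hnc hL.
have hmax : maxdeg_G' e id K <= K * (2 + 2 * c).
  apply/bigmax_leqP => v _; exact: degG'_bound.
have hpow : maxdeg_G' e id K ^ 4 <= K ^ 4 * (2 + 2 * c) ^ 4.
  by rewrite -expnMn leq_exp2r.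
have K4 : 0 < K ^ 4 by rewrite expn_gt0 K0.
rewrite /efficient_vm_rounds.
set ls := logstar #|T|; set K4' := K ^ 4; set M := (2 + 2 * c) ^ 4.
move: hnc hpow hL K4; rewrite -/K4' -/M -/ls.
set D := maxdeg_G' e id K ^ 4.
nia.
Qed.
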